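(* Let $\lambda=2\cos(\pi/5)$ and let $H_5$ be the subgroup of $SL(2,\mathbb R)$ generated by $S=\begin{pmatrix}0&1\\-1&0\end{pmatrix}$ and $T=\begin{pmatrix}1&\lambda\\0&1\end{pmatrix}$. Let $\tau,\pi\in\mathbb Z[\lambda]$ be nonzero and let $a$ and $b$ be the smallest positive rational integers in the ideals $(\tau)$ and $(\pi)$ respectively. Suppose $\gcd(a,b)=1$. Then $H_5=H(\tau)H(\pi)$ and $[H_5:H(\tau\pi)]=[H_5:H(\tau)]\,[H_5:H(\pi)]$.
   Context: For $\alpha\in\mathbb Z[\lambda]$, $H(\alpha)=\{(a_{ij})\in H_5 : a_{11}-1,\ a_{22}-1,\ a_{12},\ a_{21}\in \alpha\mathbb Z[\lambda]\}$ is the principal congruence subgroup of level $\alpha$. *)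

(* Defs.v *)
From HB Require Import structures.
From mathcomp Require Import all_boot all_order all_algebra.
From mathcomp Require Import all_classical all_reals all_analysis.
Set Implicit Arguments. Unset Strict Implicit. Unset Printing Implicit Defensive.
Import Order.TTheory GRing.Theory Num.Theory.
Local Open Scope ring_scope.

Section Hecke.
Variable R : realType.

Definition lam : R := 2 * cos (pi / 5%:R).

Definition inZl (x : R) : Prop := exists a b : int, x = a%:~R + b%:~R * lam.

Definition inIdeal (alpha x : R) : Prop := exists z, inZl z /\ x = alpha * z.

Definition Smat : 'M[R]_2 := \matrix_(i < 2, j < 2)
  (if (i == 0) && (j == 0) then 0 else if (i == 0) then 1
   else if (j == 0) then -1 else 0).
Definition Tmat : 'M[R]_2 := \matrix_(i < 2, j < 2)
  (if (i == 0) && (j == 0) then 1 else if (i == 0) then lam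
   else if (j == 0) then 0 else 1).

Definition gens (g : 'M[R]_2) : Prop :=
  g = Smat \/ g = invmx Smat \/ g = Tmat \/ g = invmx Tmat.

Inductive H5 : 'M[R]_2 -> Prop :=
| H5_one : H5 1%:M
| H5_mul g M : gens g -> H5 M -> H5 (g *m M).

Definition Hcong (alpha : R) (M : 'M[R]_2) : Prop :=
  H5 M /\ inIdeal alpha (M 0 0 - 1) /\ inIdeal alpha (M 1 1 - 1)
       /\ inIdeal alpha (M 0 1) /\ inIdeal alpha (M 1 0).

Definition least_pos_int (alpha : R) (a : nat) : Prop :=
  (0 < a)%N /\ inIdeal alpha a%:R /\
  forall m : nat, (0 < m)%N -> inIdeal alpha m%:R -> (a <= m)%N.

Definition coset_reps (G H : 'M[R]_2 -> Prop) (s : seq 'M[R]_2) : Prop :=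
  (forall r, r \in s -> G r) /\
  (forall i j, (i < size s)%N -> (j < size s)%N ->
      H (invmx (nth 0 s i) *m nth 0 s j) -> i = j) /\
  (forall g, G g -> exists2 r, r \in s & H (invmx r *m g)).

Definition group_index (G H : 'M[R]_2 -> Prop) (n : nat) : Prop :=
  exists s, size s = n /\ coset_reps G H s.

End Hecke.

(* Main.v *)
Require Import Defs.
From HB Require Import structures.
From mathcomp Require Import all_boot all_order all_algebra.
From mathcomp Require Import all_classical all_reals all_analysis.
From mathcomp Require Import ring lra.
Import Order.TTheory GRing.Theory Num.Theory.
Local Open Scope ring_scope.

Section Work.
Variable R : realType.
Local Notation M2 := 'M[R]_2.
Local Notation lam := (@lam R).

Lemma lam2 : lam ^+ 2 = lam + 1.
Proof.
rewrite /Defs.lam; set x := pi / 5%:R.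
set c := cos x; set s := sin x.
have hs : s ^+ 2 = 1 - c ^+ 2 by rewrite /s /c -(cos2Dsin2 x); ring.
have hx : x + x + x = pi - (x + x) by rewrite /x; field.
have E : cos (x + x + x) = - cos (x + x).
  by rewrite hx cosB cospi sinpi; ring.
rewrite !cosD !sinD -/c -/s in E.
have pi0 : 0 < pi :> R := pi_gt0 R.
have cpos : 0 < c.
  apply: cos_gt0_pihalf; rewrite /x; apply/andP; split; lra.
have F : (c + 1) * (4 * c ^+ 2 - 2 * c - 1) = 0.
  have -> : (c + 1) * (4 * c ^+ 2 - 2 * c - 1) =
    (((c * c - s * s) * c - (s * c + c * s) * s) - (- (c * c - s * s)))
    + (3 * c + 1) * (s ^+ 2 - (1 - c ^+ 2)) by ring.
  by rewrite E hs !subrr mulr0 addr0.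
move/eqP: F; rewrite mulf_eq0 => /orP[/eqP|/eqP F]; first by lra.
have -> : (2 * c) ^+ 2 = 4 * c ^+ 2 by ring.
by apply/eqP; rewrite -subr_eq0; apply/eqP; rewrite -F; ring.
Qed.


Lemma inZl_int (k : int) : inZl (k%:~R : R).
Proof. by exists k, 0; rewrite mul0r addr0. Qed.
Lemma inZl0 : inZl (0 : R).
Proof. by have := inZl_int 0; rewrite mulr0z. Qed.
Lemma inZl1 : inZl (1 : R).
Proof. by have := inZl_int 1. Qed.
Lemma inZl_lam : inZl lam.
Proof. by exists 0, 1; rewrite mul1r add0r. Qed.
Lemma inZlD x y : inZl x -> inZl y -> inZl (x + y :> R).
Proof.
move=> [a [b ->]] [c [d ->]]; exists (a + c), (b + d).
by rewrite !rmorphD /=; ring.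
Qed.
Lemma inZlN x : inZl x -> inZl (- x :> R).
Proof.
move=> [a [b ->]]; exists (- a), (- b).
by rewrite !rmorphN /=; ring.
Qed.
Lemma inZlB x y : inZl x -> inZl y -> inZl (x - y :> R).
Proof. by move=> hx hy; apply: inZlD => //; apply: inZlN. Qed.
Lemma inZlM x y : inZl x -> inZl y -> inZl (x * y :> R).
Proof.
move=> [a [b ->]] [c [d ->]]; exists (a * c + b * d), (a * d + b * c + b * d).
rewrite !rmorphD !rmorphM /=.
have h := lam2. rewrite expr2 in h.
have -> : (a%:~R + b%:~R * lam) * (c%:~R + d%:~R * lam) =
   a%:~R * c%:~R + (a%:~R * d%:~R + b%:~R * c%:~R) * lam + b%:~R * d%:~R * (lam * lam) :> R
  by ring.
by rewrite h; ring.
Qed.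

Lemma ideal0 al : inIdeal al (0 : R).
Proof. by exists 0; split; [apply: inZl0|rewrite mulr0]. Qed.
Lemma idealD al x y : inIdeal al x -> inIdeal al y -> inIdeal al (x + y :> R).
Proof.
move=> [z [hz ->]] [w [hw ->]]; exists (z + w); split; first exact: inZlD.
by rewrite mulrDr.
Qed.
Lemma idealN al x : inIdeal al x -> inIdeal al (- x :> R).
Proof.
move=> [z [hz ->]]; exists (- z); split; first exact: inZlN.
by rewrite mulrN.
Qed.
Lemma idealB al x y : inIdeal al x -> inIdeal al y -> inIdeal al (x - y :> R).
Proof. by move=> hx hy; apply: idealD => //; apply: idealN. Qed.
Lemma idealMl al x y : inZl y -> inIdeal al x -> inIdeal al (y * x :> R).
Proof.
move=> hy [z [hz ->]]; exists (y * z); split; first exact: inZlM.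
by rewrite mulrCA.
Qed.
Lemma idealMr al x y : inZl y -> inIdeal al x -> inIdeal al (x * y :> R).
Proof. by move=> hy hx; rewrite mulrC; apply: idealMl. Qed.
Lemma idealE al x y : x = y -> inIdeal al x -> inIdeal al (y : R).
Proof. by move=> ->. Qed.

Lemma ord2P (i : 'I_2) : i = 0 \/ i = 1.
Proof. by case: i => -[|[|//]] ?; [left|right]; apply: val_inj. Qed.

Lemma forall2 (P : 'I_2 -> 'I_2 -> Prop) :
  P 0 0 -> P 0 1 -> P 1 0 -> P 1 1 -> forall i j, P i j.
Proof.
by move=> h1 h2 h3 h4 i j; case: (ord2P i) => ->; case: (ord2P j) => ->.
Qed.

Definition mk2 (a b c d : R) : M2 := \matrix_(i < 2, j < 2)
  (if i == 0 then (if j == 0 then a else b) else (if j == 0 then c else d)).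

Lemma mk2E a b c d :
  [/\ mk2 a b c d 0 0 = a, mk2 a b c d 0 1 = b, mk2 a b c d 1 0 = c &
      mk2 a b c d 1 1 = d].
Proof. by rewrite !mxE. Qed.

Lemma mulE (A B : M2) i j : (A *m B) i j = A i 0 * B 0 j + A i 1 * B 1 j.
Proof.
have e1 : lift ord0 (ord0 : 'I_1) = 1 :> 'I_2 by apply: val_inj.
have e0 : (ord0 : 'I_2) = 0 by apply: val_inj.
by rewrite !mxE !big_ord_recl big_ord0 addr0 e1 e0. Qed.

Lemma mx2eq (A B : M2) :
  A 0 0 = B 0 0 -> A 0 1 = B 0 1 -> A 1 0 = B 1 0 -> A 1 1 = B 1 1 -> A = B.
Proof.
move=> h1 h2 h3 h4; apply/matrixP; apply: forall2 => //.
Qed.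

Lemma mul_mk2 a b c d e f g h :
  mk2 a b c d *m mk2 e f g h = mk2 (a * e + b * g) (a * f + b * h)
                                   (c * e + d * g) (c * f + d * h).
Proof.
apply/matrixP => i j; rewrite mulE !mxE.
by case: (ord2P i) => ->; case: (ord2P j) => ->.
Qed.

Lemma one_mk2 : (1%:M : M2) = mk2 1 0 0 1.
Proof. by apply: mx2eq; rewrite !mxE. Qed.

Lemma Smat_mk2 : Smat R = mk2 0 1 (-1) 0.
Proof. by apply: mx2eq; rewrite !mxE. Qed.
Lemma Tmat_mk2 : Tmat R = mk2 1 lam 0 1.
Proof. by apply: mx2eq; rewrite !mxE. Qed.


Definition Sinv : M2 := mk2 0 (-1) 1 0.
Definition Tp (k : int) : M2 := mk2 1 (k%:~R * lam) 0 1.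
Definition Lp (k : int) : M2 := mk2 1 0 (- (k%:~R * lam)) 1.

Lemma invmx_eq (A B : M2) : A *m B = 1%:M -> invmx A = B.
Proof.
move=> h; have [uA _] := mulmx1_unit h.
by rewrite -[B](mulKmx uA) h mulmx1.
Qed.

Lemma SSinv : Smat R *m Sinv = 1%:M.
Proof. by rewrite Smat_mk2 /Sinv mul_mk2 one_mk2; congr mk2; ring. Qed.
Lemma invS : invmx (Smat R) = Sinv.
Proof. exact: invmx_eq SSinv. Qed.

Lemma Tp_add k l : Tp (k + l) = Tp k *m Tp l.
Proof. by rewrite /Tp mul_mk2 rmorphD /=; congr mk2; ring. Qed.
Lemma Tp0 : Tp 0 = 1%:M.
Proof. by rewrite /Tp one_mk2 mul0r. Qed.
Lemma Tp1 : Tp 1 = Tmat R.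
Proof. by rewrite /Tp Tmat_mk2 mul1r. Qed.
Lemma invT : invmx (Tmat R) = Tp (-1).
Proof. by apply: invmx_eq; rewrite -Tp1 -Tp_add addrN Tp0. Qed.

Lemma H5_gen (g : M2) : gens g -> H5 g.
Proof. by move=> hg; have := H5_mul hg (@H5_one R); rewrite mulmx1. Qed.

Lemma H5_mulmx (A B : M2) : H5 A -> H5 B -> H5 (A *m B).
Proof.
elim=> [|g M hg _ IH] hB; first by rewrite mul1mx.
by rewrite -mulmxA; apply: H5_mul => //; apply: IH.
Qed.

Lemma H5S : H5 (Smat R). Proof. by apply: H5_gen; left. Qed.
Lemma H5Sinv : H5 (invmx (Smat R)). Proof. by apply: H5_gen; right; left. Qed.
Lemma H5T : H5 (Tmat R). Proof. by apply: H5_gen; right; right; left. Qed.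
Lemma H5Tinv : H5 (invmx (Tmat R)). Proof. by apply: H5_gen; right; right; right. Qed.

Lemma H5_Tp k : H5 (Tp k).
Proof.
have H : forall n : nat, H5 (Tp n%:Z) /\ H5 (Tp (- n%:Z)).
  elim=> [|n [IH1 IH2]]; first by rewrite oppr0 Tp0; split; apply: H5_one.
  split.
    by rewrite intS Tp_add Tp1; apply: H5_mulmx => //; apply: H5T.
  rewrite intS opprD Tp_add -invT; apply: H5_mulmx => //; apply: H5Tinv.
by case: k => n; [case: (H n)|rewrite NegzE; case: (H n.+1)].
Qed.

Lemma Lp_eq k : Lp k = Smat R *m Tp k *m Sinv.
Proof. by rewrite Smat_mk2 /Tp /Sinv /Lp !mul_mk2; congr mk2; ring. Qed.

Lemma H5_Lp k : H5 (Lp k).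
Proof.
rewrite Lp_eq -invS; apply: H5_mulmx; last exact: H5Sinv.
by apply: H5_mulmx; [apply: H5S|apply: H5_Tp].
Qed.

Lemma gens_unit (g : M2) : gens g -> g \in unitmx.
Proof.
have uS : Smat R \in unitmx by case: (mulmx1_unit SSinv).
have uT : Tmat R \in unitmx.
  have h : Tmat R *m Tp (-1) = 1%:M by rewrite -Tp1 -Tp_add addrN Tp0.
  by case: (mulmx1_unit h).
by case=> [->|[->|[->|->]]]; rewrite ?unitmx_inv.
Qed.

Lemma H5_unit (A : M2) : H5 A -> A \in unitmx.
Proof.
elim=> [|g M hg _ IH]; first exact: unitmx1.
by rewrite unitmx_mul IH gens_unit.
Qed.

Lemma invmx_mul (A B : M2) : A \in unitmx -> B \in unitmx ->
  invmx (A *m B) = invmx B *m invmx A.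
Proof.
move=> uA uB; apply: invmx_eq.
by rewrite mulmxA -(mulmxA A) mulmxV // mulmx1 mulmxV.
Qed.

Lemma H5_inv (A : M2) : H5 A -> H5 (invmx A).
Proof.
elim=> [|g M hg hM IH]; first by rewrite invmx1; apply: H5_one.
rewrite (invmx_mul _ _ (gens_unit _ hg) (H5_unit _ hM)); apply: H5_mulmx => //.
apply: H5_gen; case: hg => [->|[->|[->|->]]]; rewrite ?invmxK; rewrite /gens; tauto.
Qed.

Definition ZM (A : M2) := forall i j, inZl (A i j).

Lemma ZM_mk2 a b c d : inZl a -> inZl b -> inZl c -> inZl d -> ZM (mk2 a b c d).
Proof.
by move=> ha hb hc hd; apply: forall2; rewrite !mxE.
Qed.

Lemma ZM_mul (A B : M2) : ZM A -> ZM B -> ZM (A *m B).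
Proof. by move=> hA hB i j; rewrite mulE; apply: inZlD; apply: inZlM. Qed.

Lemma ZM1 : ZM 1%:M.
Proof.
by rewrite one_mk2; apply: ZM_mk2; [exact: inZl1|exact: inZl0|exact: inZl0|exact: inZl1].
Qed.

Lemma ZM_Tp k : ZM (Tp k).
Proof.
apply: ZM_mk2; [exact: inZl1| |exact: inZl0|exact: inZl1].
by apply: inZlM; [apply: inZl_int|apply: inZl_lam].
Qed.

Lemma ZM_gens (g : M2) : gens g -> ZM g.
Proof.
have m1 := inZlN _ inZl1.
case=> [->|[->|[->|->]]]; rewrite ?invS ?invT; try apply: ZM_Tp.
- by rewrite Smat_mk2; apply: ZM_mk2; [exact: inZl0|exact: inZl1|exact: m1|exact: inZl0].
- by apply: ZM_mk2; [exact: inZl0|exact: m1|exact: inZl1|exact: inZl0].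
- by rewrite -Tp1; apply: ZM_Tp.
Qed.

Lemma H5_ZM (A : M2) : H5 A -> ZM A.
Proof.
elim=> [|g M hg _ IH]; first exact: ZM1.
by apply: ZM_mul => //; apply: ZM_gens.
Qed.


Definition cong (al : R) (X Y : M2) := forall i j, inIdeal al (X i j - Y i j).

Lemma cong_refl al X : cong al X X.
Proof. by move=> i j; rewrite subrr; apply: ideal0. Qed.
Lemma cong_sym al X Y : cong al X Y -> cong al Y X.
Proof. by move=> h i j; rewrite -opprB; apply: idealN. Qed.
Lemma cong_trans al X Y Z : cong al X Y -> cong al Y Z -> cong al X Z.
Proof.
move=> h1 h2 i j; have -> : X i j - Z i j = (X i j - Y i j) + (Y i j - Z i j) by ring.
exact: idealD.
Qed.

Lemma cong_mul al (X X' Y Y' : M2) : ZM X -> ZM Y' -> cong al X Y -> cong al X' Y' ->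
  cong al (X *m X') (Y *m Y').
Proof.
move=> hX hY h1 h2 i j; rewrite !mulE.
have -> : X i 0 * X' 0 j + X i 1 * X' 1 j - (Y i 0 * Y' 0 j + Y i 1 * Y' 1 j) =
  X i 0 * (X' 0 j - Y' 0 j) + (X i 0 - Y i 0) * Y' 0 j +
  (X i 1 * (X' 1 j - Y' 1 j) + (X i 1 - Y i 1) * Y' 1 j) by ring.
by apply: idealD; apply: idealD; [apply: idealMl|apply: idealMr|apply: idealMl|apply: idealMr].
Qed.

Lemma Hcong_iff al (M : M2) : Hcong al M <-> H5 M /\ cong al M 1%:M.
Proof.
split.
  move=> [hM [h00 [h11 [h01 h10]]]]; split => //.
  by apply: forall2; rewrite !mxE /= ?subr0.
move=> [hM hc]; split => //.
have := hc 0 0; have := hc 1 1; have := hc 0 1; have := hc 1 0.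
by rewrite !mxE /= ?subr0.
Qed.

Lemma E_iff al (x y : M2) : H5 x -> H5 y ->
  (Hcong al (invmx x *m y) <-> cong al x y).
Proof.
move=> hx hy; have ux := H5_unit _ hx; rewrite Hcong_iff; split.
  move=> [_ h]; have := cong_mul _ _ _ _ _ (H5_ZM _ hx) ZM1 (cong_refl al x) h.
  by rewrite mulKVmx // mulmx1 => /cong_sym.
move=> h; split; first by apply: H5_mulmx => //; apply: H5_inv.
have := cong_mul _ _ _ _ _ (H5_ZM _ (H5_inv _ hx)) (H5_ZM _ hx) (cong_refl al (invmx x)) (cong_sym _ _ _ h).
by rewrite mulVmx.
Qed.


Lemma ideal_intlam al (n : nat) (m : int) :
  inIdeal al (n%:R) -> inIdeal al ((m * n%:Z)%:~R * lam).
Proof.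
move=> h; rewrite rmorphM /= -pmulrn.
have -> : m%:~R * n%:R * lam = (m%:~R * lam) * n%:R :> R by ring.
by apply: idealMl => //; apply: inZlM; [apply: inZl_int|apply: inZl_lam].
Qed.

Lemma cong_Tp al m n : inIdeal al ((m - n)%:~R * lam) -> cong al (Tp m) (Tp n).
Proof.
move=> h; apply: forall2; rewrite !mxE /= ?subrr; try exact: ideal0.
by apply: (idealE _ _ _ _ h); rewrite rmorphB /=; ring.
Qed.

Lemma cong_Lp al m n : inIdeal al ((m - n)%:~R * lam) -> cong al (Lp m) (Lp n).
Proof.
move=> h; apply: forall2; rewrite !mxE /= ?subrr; try exact: ideal0.
by apply: (idealE _ _ _ _ (idealN _ _ h)); rewrite rmorphB /=; ring.
Qed.

Lemma Lp0 : Lp 0 = 1%:M.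
Proof. by rewrite /Lp one_mk2 mul0r oppr0. Qed.

Definition Qp (ta pa : R) (M : M2) :=
  exists A, H5 A /\ cong ta A 1%:M /\ cong pa A M.

Lemma Q_mul ta pa (M N : M2) : Qp ta pa M -> Qp ta pa N -> H5 N -> Qp ta pa (M *m N).
Proof.
move=> [A [hA [h1 h2]]] [B [hB [h3 h4]]] hN; exists (A *m B); split.
  exact: H5_mulmx.
split.
  have := cong_mul _ _ _ _ _ (H5_ZM _ hA) ZM1 h1 h3; by rewrite mulmx1.
exact: cong_mul _ _ _ _ _ (H5_ZM _ hA) (H5_ZM _ hN) h2 h4.
Qed.

Lemma lamred (r p q : R) : p - q = (lam ^+ 2 - lam - 1) * r -> p = q.
Proof.
move=> h; apply/eqP; rewrite -subr_eq0 h lam2.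
have -> : lam + 1 - lam - 1 = 0 by ring.
by rewrite mul0r.
Qed.

Lemma S_word : Smat R = Tp (-1) *m Lp (-1) *m Tp (-1) *m Lp (-1) *m Tp (-1).
Proof.
rewrite Smat_mk2 /Tp /Lp !mul_mk2 !mulrN1z; congr mk2.
- by apply: (lamred (1 - lam - lam ^+ 2)); ring.
- by apply: (lamred (- (1 + 2 * lam - lam ^+ 2 - lam ^+ 3))); ring.
- by apply: (lamred (1 + lam)); ring.
- by apply: (lamred (1 - lam - lam ^+ 2)); ring.
Qed.

Lemma Sinv_word : invmx (Smat R) = Smat R *m Smat R *m Smat R.
Proof. by rewrite invS /Sinv Smat_mk2 !mul_mk2; congr mk2; ring. Qed.

Section Part1.
Variables (ta pa : R) (a b : nat) (x y : int).
Hypotheses (ha : inIdeal ta a%:R) (hb : inIdeal pa b%:R) (hxy : x * a%:Z + y * b%:Z = 1).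

Lemma Q_Tp k : Qp ta pa (Tp k).
Proof.
exists (Tp (k * x * a%:Z)); split; first exact: H5_Tp.
split; first by rewrite -Tp0; apply: cong_Tp; rewrite subr0; apply: ideal_intlam.
apply: cong_Tp.
have -> : k * x * a%:Z - k = (- (k * y)) * b%:Z.
  by transitivity (k * x * a%:Z - k * (x * a%:Z + y * b%:Z)); [rewrite hxy mulr1|ring].
exact: ideal_intlam.
Qed.

Lemma Q_Lp k : Qp ta pa (Lp k).
Proof.
exists (Lp (k * x * a%:Z)); split; first exact: H5_Lp.
split; first by rewrite -Lp0; apply: cong_Lp; rewrite subr0; apply: ideal_intlam.
apply: cong_Lp.
have -> : k * x * a%:Z - k = (- (k * y)) * b%:Z.
  by transitivity (k * x * a%:Z - k * (x * a%:Z + y * b%:Z)); [rewrite hxy mulr1|ring].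
exact: ideal_intlam.
Qed.

Lemma Q_S : Qp ta pa (Smat R).
Proof.
rewrite S_word.
apply: Q_mul; [|exact: Q_Tp|exact: H5_Tp].
apply: Q_mul; [|exact: Q_Lp|exact: H5_Lp].
apply: Q_mul; [|exact: Q_Tp|exact: H5_Tp].
apply: Q_mul; [exact: Q_Tp|exact: Q_Lp|exact: H5_Lp].
Qed.

Lemma Q_gens g : gens g -> Qp ta pa g.
Proof.
case=> [->|[->|[->|->]]].
- exact: Q_S.
- rewrite Sinv_word; apply: Q_mul; [|exact: Q_S|exact: H5S].
  apply: Q_mul; [exact: Q_S|exact: Q_S|exact: H5S].
- by rewrite -Tp1; apply: Q_Tp.
- by rewrite invT; apply: Q_Tp.
Qed.

Lemma H5_Q M : H5 M -> Qp ta pa M.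
Proof.
elim=> [|g N hg hN IH].
  by exists 1%:M; split; [apply: H5_one|split; apply: cong_refl].
by apply: Q_mul => //; apply: Q_gens.
Qed.

Lemma part1 M : H5 M <-> exists A B, Hcong ta A /\ Hcong pa B /\ M = A *m B.
Proof.
split.
  move=> hM; have [A [hA [h1 h2]]] := H5_Q _ hM.
  exists A, (invmx A *m M); split; first by apply/Hcong_iff.
  split; first by apply/E_iff.
  by rewrite mulKVmx // H5_unit.
move=> [A [B [[hA _] [[hB _] ->]]]]; exact: H5_mulmx.
Qed.

End Part1.


Definition Cdist al (s : seq M2) := forall i j, (i < size s)%N -> (j < size s)%N ->
  cong al (nth 0 s i) (nth 0 s j) -> i = j.

Lemma reps_of al (s : seq M2) : (forall r, r \in s -> H5 r) -> Cdist al s ->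
  (forall g, H5 g -> exists2 r, r \in s & cong al r g) ->
  coset_reps (@H5 R) (Hcong al) s.
Proof.
move=> hs hd hc; split => //; split.
  move=> i j hi hj /E_iff h; apply: hd => //; apply: h; apply: hs; exact: mem_nth.
move=> g hg; have [r hr hrg] := hc g hg; exists r => //.
by apply/E_iff => //; apply: hs.
Qed.

Lemma reps_to al (s : seq M2) : coset_reps (@H5 R) (Hcong al) s ->
  [/\ (forall r, r \in s -> H5 r), Cdist al s &
   (forall g, H5 g -> exists2 r, r \in s & cong al r g)].
Proof.
move=> [hs [hd hc]]; split => //.
  move=> i j hi hj h; apply: hd => //; apply/E_iff => //; apply: hs; exact: mem_nth.
move=> g hg; have [r hr hrg] := hc g hg; exists r => //.
by move/E_iff: hrg; apply => //; apply: hs.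
Qed.

Lemma extract al (l : seq M2) : (forall r, r \in l -> H5 r) ->
  exists s : seq M2, [/\ (forall r, r \in s -> H5 r), Cdist al s &
    (forall y, y \in l -> exists2 r, r \in s & cong al r y)].
Proof.
elim: l => [|x t IH] hl.
  by exists [::]; split => // i j; rewrite /= ltn0.
have ht : forall r, r \in t -> H5 r by move=> r hr; apply: hl; rewrite inE hr orbT.
have hx : H5 x by apply: hl; rewrite inE eqxx.
have [s [hs hd hc]] := IH ht.
case: (pselect (exists2 r, r \in s & cong al r x)) => [[r0 hr0 hr0x]|hn].
  exists s; split => // y; rewrite inE => /orP[/eqP ->|hy]; first by exists r0.
  exact: hc.
exists (x :: s); split.
- by move=> r; rewrite inE => /orP[/eqP ->|]; [|apply: hs].
- move=> [|i] [|j] //= hi hj h.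
  + by exfalso; apply: hn; exists (nth 0 s j); [apply: mem_nth|apply: cong_sym].
  + by exfalso; apply: hn; exists (nth 0 s i); [apply: mem_nth|].
  + by congr S; apply: hd.
- move=> y; rewrite inE => /orP[/eqP ->|hy].
    by exists x; [rewrite inE eqxx|apply: cong_refl].
  by have [r hr hry] := hc y hy; exists r => //; rewrite inE hr orbT.
Qed.

Definition coord (x : R) : int * int :=
  match pselect (inZl x) with
  | left h => let (u, hu) := cid h in let (v, _) := cid hu in (u, v)
  | right _ => (0, 0)
  end.

Lemma coordP x : inZl x -> x = (coord x).1%:~R + (coord x).2%:~R * lam.
Proof.
move=> hx; rewrite /coord; case: (pselect (inZl x)) => // h.
by case: (cid h) => u hu; case: (cid hu) => v hv.
Qed.

Section Key.
Variable m : nat.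
Definition md (u : int) : 'I_m.+1 := inord `|(u %% m.+1%:Z)%Z|%N.

Lemma md_eq u u' : md u = md u' -> exists q, u - u' = q * m.+1%:Z.
Proof.
move=> /(congr1 val); rewrite /md /= !inordK; last 2 first.
- by rewrite -ltz_nat gez0_abs ?modz_ge0 // ltz_mod.
- by rewrite -ltz_nat gez0_abs ?modz_ge0 // ltz_mod.
move=> h.
have e : (u %% m.+1%:Z)%Z = (u' %% m.+1%:Z)%Z.
  by rewrite -(gez0_abs (modz_ge0 _ _)) // -[RHS](gez0_abs (modz_ge0 _ _)) // h.
have : (m.+1%:Z %| u - u')%Z by rewrite -eqz_mod_dvd; apply/eqP.
by move/dvdzP.
Qed.

Definition keyM (M : M2) : {ffun 'I_2 * 'I_2 -> 'I_m.+1 * 'I_m.+1} :=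
  [ffun ij => (md (coord (M ij.1 ij.2)).1, md (coord (M ij.1 ij.2)).2)].

Lemma ideal_int (al : R) (n : nat) (k : int) :
  inIdeal al (n%:R) -> inIdeal al ((k * n%:Z)%:~R).
Proof.
move=> h; rewrite rmorphM /= -pmulrn.
by apply: idealMl => //; apply: inZl_int.
Qed.

Lemma key_cong al (M M' : M2) : inIdeal al (m.+1)%:R -> ZM M -> ZM M' ->
  keyM M = keyM M' -> cong al M M'.
Proof.
move=> ha hM hM' hk i j.
move/ffunP: hk => /(_ (i, j)); rewrite !ffunE /= => -[/md_eq [q hq] /md_eq [q' hq']].
rewrite (coordP _ (hM i j)) (coordP _ (hM' i j)).
have -> : (coord (M i j)).1%:~R + (coord (M i j)).2%:~R * lam -
          ((coord (M' i j)).1%:~R + (coord (M' i j)).2%:~R * lam) =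
          ((coord (M i j)).1 - (coord (M' i j)).1)%:~R +
          ((coord (M i j)).2 - (coord (M' i j)).2)%:~R * lam :> R.
  by rewrite !rmorphB /=; ring.
rewrite hq hq'; apply: idealD; [apply: ideal_int|apply: ideal_intlam]; exact: ha.
Qed.

Definition pickM (k : {ffun 'I_2 * 'I_2 -> 'I_m.+1 * 'I_m.+1}) : M2 :=
  match pselect (exists M : M2, H5 M /\ keyM M = k) with
  | left h => sval (cid h)
  | right _ => 1%:M
  end.

Lemma pickM_H5 k : H5 (pickM k).
Proof.
rewrite /pickM; case: pselect => [h|_]; last exact: H5_one.
by case: (cid h) => M [].
Qed.

Lemma pickM_key g : H5 g -> keyM (pickM (keyM g)) = keyM g.
Proof.
move=> hg; rewrite /pickM; case: pselect => [h|hn]; last by exfalso; apply: hn; exists g.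
by case: (cid h) => M [].
Qed.

Lemma finite_index al : inIdeal al (m.+1)%:R ->
  exists n, group_index (@H5 R) (Hcong al) n.
Proof.
move=> ha.
pose l := [seq pickM k | k <- enum {: {ffun 'I_2 * 'I_2 -> 'I_m.+1 * 'I_m.+1}}].
have hl : forall r, r \in l -> H5 r by move=> r /mapP [k _ ->]; apply: pickM_H5.
have [s [hs hd hc]] := extract al l hl.
exists (size s), s; split => //; apply: reps_of => // g hg.
have hp : pickM (keyM g) \in l by apply: map_f; rewrite mem_enum.
have [r hr hrp] := hc _ hp; exists r => //.
apply: cong_trans hrp _; apply: key_cong => //; try apply: H5_ZM => //; try apply: pickM_H5.
exact: pickM_key.
Qed.

End Key.


Lemma ideal_inter (t p e f : R) : inZl t -> inZl p -> inZl e -> inZl f ->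
  t * e + p * f = 1 -> forall x, inIdeal (t * p) x <-> inIdeal t x /\ inIdeal p x.
Proof.
move=> ht hp he hf hef x; split.
  move=> [z [hz ->]]; split.
    by exists (p * z); split; [apply: inZlM|rewrite mulrA].
  by exists (t * z); split; [apply: inZlM|ring].
move=> [[z1 [hz1 e1]] [z2 [hz2 e2]]]; exists (e * z2 + f * z1); split.
  by apply: inZlD; apply: inZlM.
transitivity (t * e * x + p * f * x); first by rewrite -mulrDl hef mul1r.
by rewrite {1}e2 e1; ring.
Qed.

Section CRT.
Variables (t p : R).
Hypothesis hdec : forall M, H5 M -> exists A B, Hcong t A /\ Hcong p B /\ M = A *m B.
Hypothesis hint : forall x, inIdeal (t * p) x <-> inIdeal t x /\ inIdeal p x.

Lemma cong_int X Y : cong (t * p) X Y <-> cong t X Y /\ cong p X Y.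
Proof.
split.
  by move=> h; split => i j; have /hint [] := h i j.
by move=> [h1 h2] i j; apply/hint; split.
Qed.

Lemma crt_ex (r1 r2 : M2) : H5 r1 -> H5 r2 ->
  exists g, H5 g /\ cong t g r1 /\ cong p g r2.
Proof.
move=> hr1 hr2.
have [A [B [hA [hB e]]]] := hdec _ (H5_mulmx _ _ (H5_inv _ hr1) hr2).
have [hA5 cA] := proj1 (Hcong_iff _ _) hA.
have [hB5 cB] := proj1 (Hcong_iff _ _) hB.
have uB := H5_unit _ hB5.
have e2 : r1 *m A = r2 *m invmx B.
  by rewrite -[r2](mulKVmx (H5_unit _ hr1)) e mulmxA mulmxK.
exists (r1 *m A); split; first exact: H5_mulmx.
split.
  have := cong_mul _ _ _ _ _ (H5_ZM _ hr1) ZM1 (cong_refl t r1) cA.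
  by rewrite mulmx1.
have cBi : cong p (invmx B) 1%:M.
  have : Hcong p (invmx B *m 1%:M) by apply/E_iff => //; apply: H5_one.
  by rewrite mulmx1 => /Hcong_iff [].
have := cong_mul _ _ _ _ _ (H5_ZM _ hr2) ZM1 (cong_refl p r2) cBi.
by rewrite mulmx1 e2.
Qed.

Lemma crt n1 n2 : group_index (@H5 R) (Hcong t) n1 -> group_index (@H5 R) (Hcong p) n2 ->
  group_index (@H5 R) (Hcong (t * p)) (n1 * n2).
Proof.
move=> [s1 [hn1 /reps_to [h1 d1 c1]]] [s2 [hn2 /reps_to [h2 d2 c2]]].
have n2pos : (0 < n2)%N.
  have [r hr _] := c2 _ (@H5_one R); rewrite -hn2; move: hr; by case: (s2).
pose P (g r1 r2 : M2) := H5 g /\ cong t g r1 /\ cong p g r2.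
pose hg (r1 r2 : M2) := match pselect (exists g, P g r1 r2) with
  | left e => sval (cid e) | right _ => 1%:M end.
have hgP : forall r1 r2, H5 r1 -> H5 r2 -> P (hg r1 r2) r1 r2.
  move=> r1 r2 hr1 hr2; rewrite /hg; case: pselect => [e|hn].
    exact: (svalP (cid e)).
  by exfalso; apply: hn; apply: crt_ex.
pose f k := hg (nth 0 s1 (k %/ n2)) (nth 0 s2 (k %% n2)).
have fP : forall k, (k < n1 * n2)%N -> P (f k) (nth 0 s1 (k %/ n2)) (nth 0 s2 (k %% n2)).
  move=> k hk; apply: hgP.
    by apply: h1; apply: mem_nth; rewrite hn1 ltn_divLR.
  by apply: h2; apply: mem_nth; rewrite hn2 ltn_pmod.
exists (mkseq f (n1 * n2)); split; first by rewrite size_mkseq.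
apply: reps_of.
- move=> r; rewrite /mkseq => /mapP [k]; rewrite mem_iota add0n => /andP[_ hk] ->.
  by case: (fP k hk).
- move=> i j; rewrite size_mkseq => hi hj; rewrite !nth_mkseq // => /cong_int [ht hp].
  have [_ [ti qi]] := fP i hi; have [_ [tj qj]] := fP j hj.
  have e1 : (i %/ n2 = j %/ n2)%N.
    apply: d1; rewrite ?hn1 ?ltn_divLR //.
    exact: cong_trans (cong_sym _ _ _ ti) (cong_trans _ _ _ _ ht tj).
  have e2 : (i %% n2 = j %% n2)%N.
    apply: d2; rewrite ?hn2 ?ltn_pmod //.
    exact: cong_trans (cong_sym _ _ _ qi) (cong_trans _ _ _ _ hp qj).
  by rewrite (divn_eq i n2) (divn_eq j n2) e1 e2.
- move=> g hg5; have [r1 hr1 hr1g] := c1 g hg5; have [r2 hr2 hr2g] := c2 g hg5.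
  have hi1 : (index r1 s1 < n1)%N by rewrite -hn1 index_mem.
  have hi2 : (index r2 s2 < n2)%N by rewrite -hn2 index_mem.
  pose k := (index r1 s1 * n2 + index r2 s2)%N.
  have kd : (k %/ n2 = index r1 s1)%N by rewrite divnMDl // divn_small // addn0.
  have km : (k %% n2 = index r2 s2)%N by rewrite modnMDl modn_small.
  have hk : (k < n1 * n2)%N by rewrite -ltn_divLR // kd.
  exists (f k).
    by rewrite /mkseq; apply: map_f; rewrite mem_iota add0n hk.
  apply/cong_int; have [_ [tk pk]] := fP k hk.
  rewrite kd km (nth_index 0 hr1) (nth_index 0 hr2) in tk pk.
  by split; [apply: cong_trans tk hr1g|apply: cong_trans pk hr2g].
Qed.

End CRT.

End Work.

Theorem lemma4p1 (R : realType) (tau pi0 : R) (a b : nat) :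
  inZl tau -> inZl pi0 -> tau != 0 -> pi0 != 0 ->
  least_pos_int tau a -> least_pos_int pi0 b -> coprime a b ->
  (forall M : 'M[R]_2, H5 M <->
     exists A B, Hcong tau A /\ Hcong pi0 B /\ M = A *m B) /\
  exists n1 n2 : nat,
    group_index (@H5 R) (Hcong tau) n1 /\
    group_index (@H5 R) (Hcong pi0) n2 /\
    group_index (@H5 R) (Hcong (tau * pi0)) (n1 * n2).
Proof.
move=> ht hp _ _ [apos [ha _]] [bpos [hb _]] cop.
have [[x y] /= hxy] : exists uv : int * int, uv.1 * a%:Z + uv.2 * b%:Z = 1.
  by apply/coprimezP; exact: cop.
have P1 := @part1 R tau pi0 a b x y ha hb hxy.
split; first exact: P1.
have := @finite_index R a.-1 tau; rewrite prednK // => /(_ ha) [n1 g1].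
have := @finite_index R b.-1 pi0; rewrite prednK // => /(_ hb) [n2 g2].
exists n1, n2; split => //; split => //.
have [za [hza ea]] := ha; have [zb [hzb eb]] := hb.
have hint := @ideal_inter R tau pi0 (x%:~R * za) (y%:~R * zb) ht hp
  (inZlM _ _ _ (inZl_int _ _) hza) (inZlM _ _ _ (inZl_int _ _) hzb).
apply: (@crt R tau pi0 (fun M hM => proj1 (P1 M) hM)) => //.
apply: hint.
transitivity (x%:~R * a%:R + y%:~R * b%:R : R); first by rewrite ea eb; ring.
have h := congr1 (fun z : int => (z%:~R : R)) hxy.
rewrite /= rmorphD !rmorphM /= -!pmulrn in h.
by rewrite h.
Qed.
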